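(* Let $P$ be a well-quasi-ordered poset. Then $\mathcal{J}(P)$, as a subspace of $\mathfrak{P}(P)$, is a compact scattered space, and its set of isolated points is exactly $\{\downarrow x: x\in P\}$, the set of principal ideals.
   Context: $\mathfrak{P}(P)$ is the power set of $P$ with the topology whose basic open sets are $O(F,G)=\{X\subseteq P: F\subseteq X,\ G\cap X=\emptyset\}$ for finite $F,G\subseteq P$ (the product topology on $2^P$). $\mathcal{J}(P)$ is the set of ideals of $P$: nonempty initial segments (closed downward) which are up-directed (any two elements have an upper bound in the set). $\downarrow x=\{y\in P: y\leq x\}$. A space is scattered if every nonempty subset has a point isolated in the induced topology. Well-quasi-ordered means well-founded with no infinite antichain. *)

(* Defs.v *)
From HB Require Import structures.
From mathcomp Require Import all_boot all_order.
From mathcomp Require Import all_classical all_reals all_analysis.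
Set Implicit Arguments. Unset Strict Implicit. Unset Printing Implicit Defensive.
Import Order.TTheory.
Local Open Scope classical_set_scope.
Local Open Scope order_scope.

(* The power set of P with the product topology of 2^P: a subset X of P is
   represented by its characteristic function P -> bool; bool carries the
   discrete topology and {ptws P -> bool} the product (pointwise) topology. *)
Definition powerspace (d : Order.disp_t) (P : porderType d) : topologicalType :=
  {ptws P -> bool}.

Definition wqo (d : Order.disp_t) (P : porderType d) : Prop :=
  well_founded (fun x y : P => x < y) /\
  ~ (exists f : nat -> P, forall i j : nat, i <> j -> ~~ (f i >=< f j)).

Definition is_ideal (d : Order.disp_t) (P : porderType d) (X : powerspace P) : Prop :=
  (exists x : P, X x) /\
  (forall x y : P, y <= x -> X x -> X y) /\
  (forall x y : P, X x -> X y -> exists z : P, [/\ X z, x <= z & y <= z]).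

Definition ideals (d : Order.disp_t) (P : porderType d) : set (powerspace P) :=
  [set X | is_ideal X].

Definition downset (d : Order.disp_t) (P : porderType d) (x : P) : powerspace P :=
  fun y : P => y <= x.

(* A subset A of a topological space is scattered (in the induced topology):
   every nonempty subset has a point isolated in it.  (Isolation in the
   ambient space relative to S is the same as isolation in the subspace S.) *)
Definition scattered (T : topologicalType) (A : set T) : Prop :=
  forall S : set T, S `<=` A -> S !=set0 -> exists x : T, isolated S x.
Arguments ideals {d} P.
Arguments powerspace {d} P.
Arguments wqo {d} P.
Arguments downset {d P} x.

(* Main.v *)
Require Import Defs.
From HB Require Import structures.
From mathcomp Require Import all_boot all_order.
From mathcomp Require Import all_classical all_reals all_analysis.
Import Order.TTheory.
Local Open Scope classical_set_scope.
Local Open Scope order_scope.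

Section Top.
Variables (d : Order.disp_t) (P : porderType d).

Definition agree (f : powerspace P) (s : seq P) : set (powerspace P) :=
  [set g | forall b, b \in s -> g b = f b].

Lemma nbhs_coord (f : powerspace P) (b : P) :
  nbhs f [set g : powerspace P | g b = f b].
Proof.
apply: open_nbhs_nbhs; split => //.
have -> : [set g : powerspace P | g b = f b] = proj b @^-1` [set f b] by [].
apply: open_comp; [move=> + _; exact: proj_continuous | exact: discrete_open].
Qed.

Lemma nbhs_agree (f : powerspace P) (s : seq P) : nbhs f (agree f s).
Proof.
elim: s => [|b s IH].
  by apply: filterS (@filterT _ (nbhs f) _ ) => g _ b; rewrite in_nil.
apply: filterS (filterI (nbhs_coord f b) IH) => g [gb gs] c.
by rewrite in_cons => /orP[/eqP->|/gs].
Qed.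

Lemma nbhs_agreeP (f : powerspace P) (U : set (powerspace P)) :
  nbhs f U -> exists s, agree f s `<=` U.
Proof.
pose G := filter_from [set: seq P] (agree f).
have FG : Filter G.
  apply: filter_from_filter; first by exists [::].
  move=> s t _ _; exists (s ++ t) => // g gst; split => b bs; apply: gst;
  by rewrite mem_cat bs ?orbT.
suff cG : G --> f.
  by move=> /cG [s _ sU]; exists s.
apply/cvg_sup => i; apply/cvg_image => //.
  by apply/seteqP; split => // v _; exists (fun=> v).
move=> W /= Wfi.
exists [set g : powerspace P | W (g i)].
  exists [:: i] => // g /(_ i); rewrite mem_seq1 eqxx => /(_ isT). by rewrite /= => ->; move: Wfi; rewrite nbhs_principalE => /principal_filterP.
by apply/seteqP; split => [v [g Wg <-]//|v Wv]; exists (fun=> v).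
Qed.

Lemma powerspace_compact : compact [set: powerspace P].
Proof.
have := @tychonoff _ (fun _ : P => bool) _ (fun=> bool_compact).
by congr (compact _); rewrite eqEsubset.
Qed.

Section Ord.
Variable wf : well_founded (fun x y : P => x < y).
Variable noac : ~ (exists f : nat -> P, forall i j : nat, i <> j -> ~~ (f i >=< f j)).

Lemma min_below (U : set P) u : U u ->
  exists m, [/\ U m, m <= u & forall v, U v -> ~ v < m].
Proof.
elim/(well_founded_induction wf): u => u IH Uu.
have [[v [Uv vu]]|nv] := pselect (exists v, U v /\ v < u).
  have [m [Um mv mmin]] := IH v vu Uv; exists m; split => //.
  exact: le_trans mv (ltW vu).
by exists u; split => // v Uv vu; apply: nv; exists v.
Qed.

Lemma basis (U : set P) : exists s : seq P,
  (forall b, b \in s -> U b) /\ (forall u, U u -> exists2 b, b \in s & b <= u).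
Proof.
have [//|H] := pselect (exists s : seq P,
  (forall b, b \in s -> U b) /\ (forall u, U u -> exists2 b, b \in s & b <= u)).
pose Min m := U m /\ forall v, U v -> ~ v < m.
pose I (s : seq P) := forall b, b \in s -> Min b.
have step : forall s, exists s', I s -> exists m,
    [/\ s' = m :: s, Min m & forall b, b \in s -> ~ b <= m].
  move=> s; have [Is|nIs] := pselect (I s); last by exists s.
  have : ~ (forall u, U u -> exists2 b, b \in s & b <= u).
    by move=> cov; apply: H; exists s; split => // b /Is [].
  move=> /existsNP [u] /not_implyP [Uu nb].
  have [m [Um mu mmin]] := @min_below U u Uu.
  exists (m :: s) => _; exists m; split => // b bs bm; apply: nb.
  by exists b => //; exact: le_trans bm mu.
have [f fP] := choice step.
pose sq n := iter n f [::].
have Isq n : I (sq n).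
  elim: n => [|n IHn] b; first by rewrite in_nil.
  have -> : sq n.+1 = f (sq n) by [].
  have [m [-> Mm _]] := fP _ IHn.
  by rewrite in_cons => /orP[/eqP->//|]; apply: IHn.
have : forall n, exists m, [/\ sq n.+1 = m :: sq n, Min m &
    forall b, b \in sq n -> ~ b <= m].
  by move=> n; apply: (fP (sq n) (Isq n)).
move=> /choice [a aP].
have mem i k : a i \in sq (i.+1 + k).
  elim: k => [|k IHk]; first by rewrite addn0; have [-> _ _] := aP i; rewrite mem_head.
  by rewrite addnS; have [-> _ _] := aP (i.+1 + k); rewrite in_cons IHk orbT.
have lt_nle i j : (i < j)%N -> ~ a i <= a j.
  move=> ij; have [_ _ nle] := aP j; apply: nle.
  by have := mem i (j - i.+1); rewrite subnKC.
have inc i j : (i < j)%N -> ~~ (a i >=< a j).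
  move=> ij; apply/negP => /orP[|aji]; first exact: lt_nle.
  have [_ [_ Mi] _] := aP i; have [_ [Uj _] _] := aP j.
  move: aji; rewrite le_eqVlt => /orP[/eqP aji|]; last by move/(Mi _ Uj).
  by apply: (lt_nle i j ij); rewrite aji.
exfalso; apply: noac; exists a => i j /eqP; rewrite neq_ltn => /orP[/inc//|/inc].
by rewrite comparable_sym.
Qed.

Lemma downset_sub (X Y : powerspace P) (s : seq P) :
  (forall x y, y <= x -> Y x -> Y y) ->
  (forall u, ~ X u -> exists2 b, b \in s & b <= u) ->
  (forall b, b \in s -> Y b = false) -> forall p, Y p -> X p.
Proof.
move=> dY cov sY p Yp; case Xp: (X p) => //.
have [|b bs bp] := cov p; first by rewrite Xp.
by have := sY b bs; rewrite (dY _ _ bp Yp).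
Qed.


Lemma ideals_closed : closed (ideals P).
Proof.
move=> X clX.
have approx s : exists Y : powerspace P, is_ideal Y /\ agree X s Y.
  by have [Y [IY AY]] := clX _ (nbhs_agree X s); exists Y.
split.
  have [s0 [_ cov0]] := basis (fun _ : P => True).
  have [Y [[[y Yy] [dY _]] AY]] := approx s0.
  have [b bs by'] := cov0 y I.
  by exists b; rewrite -(AY b bs); exact: dY by' Yy.
split.
  move=> x y yx Xx; have [Y [[_ [dY _]] AY]] := approx [:: x; y].
  rewrite -(AY y); last by rewrite !inE eqxx orbT.
  by apply: dY yx _; rewrite (AY x) // !inE eqxx.
move=> x y Xx Xy.
have [s [sU cov]] := basis (fun z => x <= z /\ y <= z).
have [Y [[_ [dY drY]] AY]] := approx [:: x, y & s].
have Yx : Y x by rewrite (AY x) // !inE eqxx.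
have Yy : Y y by rewrite (AY y) // !inE eqxx orbT.
have [z [Yz xz yz]] := drY x y Yx Yy.
have [b bs bz] := cov z (conj xz yz).
have [xb yb] := sU b bs.
exists b; split => //; rewrite -(AY b); first exact: dY bz Yz.
by rewrite !inE bs !orbT.
Qed.

Lemma ideals_compact : compact (ideals P).
Proof.
exact: (subclosed_compact ideals_closed (powerspace_compact)).
Qed.

Lemma ub_seq (X : powerspace P) (s : seq P) : is_ideal X ->
  exists x, X x /\ forall b, b \in s -> X b -> b <= x.
Proof.
move=> [[x0 Xx0] [dX drX]]; elim: s => [|b s [x [Xx xs]]].
  by exists x0; split => // b; rewrite in_nil.
case Xb: (X b); last first.
  by exists x; split => // c; rewrite in_cons => /orP[/eqP->|/xs//]; rewrite Xb.
have [z [Xz xz bz]] := drX x b Xx Xb.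
exists z; split => // c; rewrite in_cons => /orP[/eqP->//|/xs cs /cs cx].
exact: le_trans cx xz.
Qed.

Lemma ideals_scattered : scattered (ideals P).
Proof.
move=> S SI [X0 SX0].
have [X [SX Xmin]] : exists X, S X /\
    forall Y, S Y -> (forall p, Y p -> X p) -> Y = X.
  apply: contrapT => nH.
  have step : forall X, exists Y, S X ->
      [/\ S Y, (forall p, Y p -> X p) & Y <> X].
    move=> X; have [SX|] := pselect (S X); last by exists X.
    have : ~ forall Y, S Y -> (forall p, Y p -> X p) -> Y = X.
      by move=> H; apply: nH; exists X.
    move=> /existsNP [Y] /not_implyP [SY] /not_implyP [YX nYX].
    by exists Y.
  have [g gP] := choice step.
  pose Xn n := iter n g X0.
  have XnS n : Xn n.+1 = g (Xn n) by [].
  have SXn n : S (Xn n).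
    by elim: n => // n IH; rewrite XnS; have [] := gP _ IH.
  have mono m n : (m <= n)%N -> forall p, Xn n p -> Xn m p.
    move=> mn; rewrite -(subnKC mn); elim: (n - m) => [|k IH] p.
      by rewrite addn0.
    rewrite addnS XnS => H; apply: IH.
    by have [_ sub _] := gP _ (SXn (m + k)); apply: sub.
  have [s [sU cov]] := basis (fun p => exists n, ~ Xn n p).
  have [N NP] : exists N, forall b, b \in s -> ~ Xn N b.
    elim: s sU {cov} => [|b s IH] sU; first by exists 0%N => b; rewrite in_nil.
    have [|N NP] := IH; first by move=> c cs; apply: sU; rewrite in_cons cs orbT.
    have [nb nbP] := sU b (mem_head _ _).
    exists (maxn N nb) => c; rewrite in_cons => /orP[/eqP->|/NP cN].
      by move=> /(mono nb) H; apply: nbP; apply: H; exact: leq_maxr.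
    by move=> /(mono N) H; apply: cN; apply: H; exact: leq_maxl.
  have [_ subN neqN] := gP _ (SXn N).
  apply: neqN; apply/funext => p; apply/idP/idP; first exact: subN.
  move=> XNp; apply: contrapT => nXp.
  have [|b bs bp] := cov p; first by exists N.+1.
  have [_ [dN _]] := SI _ (SXn N).
  by apply: (NP b bs); apply: dN bp XNp.
have [_ [dX _]] := SI _ SX.
have [s [sU cov]] := basis (fun p => ~ X p).
exists X; split; first by rewrite inE.
exists (agree X s); first exact: nbhs_agree.
apply/seteqP; split => [Y [AY SY]|Y ->]; last by split => // b.
apply: Xmin => //; have [_ [dY _]] := SI _ SY.
apply: (@downset_sub X Y s dY cov) => b bs; rewrite (AY b bs).
by apply/negP; apply: sU.
Qed.

Lemma downset_ideal (x : P) : is_ideal (downset x).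
Proof.
split; first by exists x; rewrite /downset /=.
split; first by move=> a b ba ax; exact: le_trans ba ax.
by move=> a b ax bx; exists x; split => //; rewrite /downset /=.
Qed.

Lemma ideals_isolated :
  isolated (ideals P) = [set X | exists x : P, X = downset x].
Proof.
apply/seteqP; split => [X [/set_mem IX [V VX VI]]|X [x ->]].
  have [s sV] := nbhs_agreeP _ _ VX.
  have [x [Xx xP]] := ub_seq X s IX.
  have [_ [dX _]] := IX.
  exists x; have : (V `&` ideals P) (downset x).
    split; last exact: downset_ideal.
    apply: sV => b bs; apply/idP/idP; first by move=> bx; exact: dX _ _ bx Xx.
    by move=> Xb; exact: xP b bs Xb.
  by move=> H; have : [set X] (downset x) by rewrite -VI.
split; first by rewrite inE; exact: downset_ideal.
have [s [sU cov]] := basis (fun p => ~ downset x p).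
exists (agree (downset x) (x :: s)); first exact: nbhs_agree.
apply/seteqP; split => [Y [AY IY]|Y ->]; last by split => //; exact: downset_ideal.
have [_ [dY _]] := IY.
have Yx : Y x by rewrite (AY x (mem_head _ _)) /downset /=.
apply/funext => p; apply/idP/idP.
  apply: (@downset_sub (downset x) Y s dY cov) => b bs.
  by rewrite (AY b); [apply/negP; apply: sU | rewrite in_cons bs orbT].
by move=> px; exact: dY px Yx.
Qed.

End Ord.
End Top.

Theorem proposition3p4 (d : Order.disp_t) (P : porderType d) :
  wqo P ->
  [/\ compact (ideals P), scattered (ideals P) &
      isolated (ideals P) = [set X | exists x : P, X = downset x]].
Proof.
move=> [wf noac]; split.
- exact: ideals_compact.
- exact: ideals_scattered.
- exact: ideals_isolated.
Qed.
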